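(* Let $G_1=(V,E_1)$, $G_2=(V,E_2)$ be a duplex network on a finite node set $V$ with driver budgets $k_1,k_2$, and let $(M_1,M_2)\in\mathcal M_1(k_1)\times\mathcal M_2(k_2)$ be a state. Let $\mathcal P$ be a feasible CLAP from $v_0\in\mathrm{DD}_1$ to $v_k\in\mathrm{DD}_2$ in this state. Applying $\mathcal P$ yields a new state $(M_1',M_2')$ satisfying: (i) $|D(M_1')|=k_1$ and $|D(M_2')|=k_2$; (ii) $\Delta(M_1',M_2')=\Delta(M_1,M_2)-2$; (iii) $|U(M_1',M_2')|=|U(M_1,M_2)|-1$.
   Context: For $\ell\in\{1,2\}$, $\mathcal B_\ell$ is the bipartite graph with vertex classes $V^+=\{v^+\}$, $V^-=\{v^-\}$ and an edge $\{u^+,v^-\}$ for each $(u,v)\in E_\ell$. For a matching $M$ in $\mathcal B_\ell$, $D(M)=\{v\in V: v^-\text{ uncovered by }M\}$, and $|D(M)|=|V|-|M|$. $\mathcal M_\ell(k_\ell)$ is the set of matchings in $\mathcal B_\ell$ of size $|V|-k_\ell$. With $D_\ell=D(M_\ell)$: $U(M_1,M_2)=D_1\cup D_2$, $\mathrm{DD}_1=D_1\setminus D_2$, $\mathrm{DD}_2=D_2\setminus D_1$, $\Delta(M_1,M_2)=|\mathrm{DD}_1|+|\mathrm{DD}_2|$. An $M_\ell$-alternating path is a simple path in $\mathcal B_\ell$ whose edges alternate between $M_\ell$ and non-$M_\ell$. An admissible segment $(u\xrightarrow{\ell}v)$ requires an $M_\ell$-alternating witness path between $u^-$ and $v^-$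 and: for $\ell=1$, $u\in D_1$, $v\notin D_1$; for $\ell=2$, $u\notin D_2$, $v\in D_2$. A CLAP is a sequence of admissible segments $v_0\xrightarrow{\ell_1}v_1\cdots\xrightarrow{\ell_k}v_k$, each with a chosen witness path, with $v_0\in\mathrm{DD}_1$, $v_k\in\mathrm{DD}_2$, consecutive layers different ($\ell_{i+1}\ne\ell_i$), and all $v_i$ distinct. It is feasible if, for each layer $\ell$, the witness paths of its layer-$\ell$ segments are pairwise edge-disjoint. Applying $\mathcal P$ means replacing, for each $\ell$, $M_\ell$ by the symmetric difference $M_\ell\triangle\bigcup E(p)$, where the union runs over the edge sets of the witness paths $p$ of all layer-$\ell$ segments of $\mathcal P$. *)

(* Defs.v *)
From HB Require Import structures.
From mathcomp Require Import all_boot.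
Set Implicit Arguments. Unset Strict Implicit. Unset Printing Implicit Defensive.

Inductive layer := L1 | L2.
Definition layer_eqb (a b : layer) : bool :=
  match a, b with L1, L1 | L2, L2 => true | _, _ => false end.
Lemma layer_eqP : Equality.axiom layer_eqb.
Proof. by case; case; constructor. Qed.
HB.instance Definition _ := hasDecEq.Build layer layer_eqP.

Section Duplex.
Variable V : finType.

(* A layer G_l = (V, E_l) is given by its set of directed edges E_l : {set V * V}.
   Vertices of the bipartite graph B_l are  V + V : inl v = v^+, inr v = v^-.
   The B_l-edge {u^+, v^-} is represented by the pair (u, v); a set M of such pairs
   is a set of edges of B_l. *)

Definition badj (E : {set V * V}) (x y : V + V) : bool :=
  match x, y with
  | inl u, inr v => (u, v) \in E
  | inr v, inl u => (u, v) \in E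
  | _, _ => false
  end.

(* the pair (u,v) naming the B-edge between x and y (meaningful when badj) *)
Definition bedge (x y : V + V) : V * V :=
  match x, y with
  | inl u, inr v => (u, v)
  | inr v, inl u => (u, v)
  | inl u, inl v => (u, v)
  | inr u, inr v => (u, v)
  end.

Definition path_edges (p : seq (V + V)) : seq (V * V) :=
  if p is x :: s then pairmap bedge x s else [::].
Definition Eset (p : seq (V + V)) : {set V * V} := [set e in path_edges p].

Definition is_matching (E M : {set V * V}) : Prop :=
  [/\ M \subset E,
      {in M &, forall e f : V * V, e.1 = f.1 -> e = f} &
      {in M &, forall e f : V * V, e.2 = f.2 -> e = f}].

Definition D (M : {set V * V}) : {set V} := [set v | [forall e in M, e.2 != v]].

Definition Mk (E : {set V * V}) (k : nat) (M : {set V * V}) : Prop :=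
  is_matching E M /\ #|M| + k = #|V|.

Definition U (M1 M2 : {set V * V}) : {set V} := D M1 :|: D M2.
Definition DD1 (M1 M2 : {set V * V}) : {set V} := D M1 :\: D M2.
Definition DD2 (M1 M2 : {set V * V}) : {set V} := D M2 :\: D M1.
Definition Delta (M1 M2 : {set V * V}) : nat := #|DD1 M1 M2| + #|DD2 M1 M2|.

Definition alt_path (E M : {set V * V}) (a b : V + V) (p : seq (V + V)) : Prop :=
  if p is x :: s then
    [/\ x = a, last x s = b, uniq p, path (badj E) x s &
        sorted (fun e f : V * V => (e \in M) != (f \in M)) (pairmap bedge x s)]
  else False.

Definition sel (A1 A2 : {set V * V}) (l : layer) : {set V * V} :=
  match l with L1 => A1 | L2 => A2 end.

Definition admissible (E1 E2 M1 M2 : {set V * V}) (l : layer) (u v : V)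
    (p : seq (V + V)) : Prop :=
  alt_path (sel E1 E2 l) (sel M1 M2 l) (inr u) (inr v) p /\
  match l with
  | L1 => u \in D M1 /\ v \notin D M1
  | L2 => u \notin D M2 /\ v \in D M2
  end.

(* A segment of a CLAP: (layer l_i, witness path p_i, end vertex v_i).
   A CLAP starting at v0 is given by v0 and the list of its segments; the i-th
   segment (0-based) goes from v_i to v_{i+1}. *)
Definition seg := (layer * seq (V + V) * V)%type.
Definition seg_layer (s : seg) : layer := s.1.1.
Definition seg_path (s : seg) : seq (V + V) := s.1.2.
Definition seg_end (s : seg) : V := s.2.

Definition clap_vertices (v0 : V) (segs : seq seg) : seq V := v0 :: map seg_end segs.

Definition is_CLAP (E1 E2 M1 M2 : {set V * V}) (v0 : V) (segs : seq seg) : Prop :=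
  let sd : seg := (L1, [::], v0) in
  let vs := clap_vertices v0 segs in
  [/\ (forall i, i < size segs ->
         admissible E1 E2 M1 M2 (seg_layer (nth sd segs i)) (nth v0 vs i)
                    (nth v0 vs i.+1) (seg_path (nth sd segs i))),
      (forall i, i.+1 < size segs ->
         seg_layer (nth sd segs i) <> seg_layer (nth sd segs i.+1)),
      uniq vs,
      v0 \in DD1 M1 M2 &
      last v0 (map seg_end segs) \in DD2 M1 M2].

Definition feasible (v0 : V) (segs : seq seg) : Prop :=
  let sd : seg := (L1, [::], v0) in
  forall i j, i < size segs -> j < size segs -> i <> j ->
    seg_layer (nth sd segs i) = seg_layer (nth sd segs j) ->
    [disjoint Eset (seg_path (nth sd segs i)) & Eset (seg_path (nth sd segs j))].

Definition symdiff (A B : {set V * V}) : {set V * V} := (A :\: B) :|: (B :\: A).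

Definition apply_layer (M : {set V * V}) (l : layer) (segs : seq seg) : {set V * V} :=
  symdiff M (\bigcup_(s <- segs | seg_layer s == l) Eset (seg_path s)).

End Duplex.

(* Main.v *)
Require Import Defs.
From mathcomp Require Import all_boot zify.
Set Implicit Arguments. Unset Strict Implicit. Unset Printing Implicit Defensive.

Definition isl {V : finType} (x : V + V) : bool := if x is inl _ then true else false.
Definition inc {V : finType} (x : V + V) (e : V * V) : bool :=
  match x with inl u => e.1 == u | inr v => e.2 == v end.

Lemma badj_sym {V : finType} (E : {set V*V}) x y : badj E x y = badj E y x.
Proof. by case: x; case: y. Qed.

Lemma bedge_sym {V : finType} (E : {set V*V}) x y : badj E x y -> bedge y x = bedge x y.
Proof. by case: x; case: y. Qed.

Lemma badj_isl {V : finType} (E : {set V*V}) x y : badj E x y -> isl y = ~~ isl x.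
Proof. by case: x; case: y. Qed.

Lemma badj_inE {V : finType} (E : {set V*V}) x y : badj E x y -> bedge x y \in E.
Proof. by case: x => a; case: y => b. Qed.

Lemma inc_bedge {V : finType} (E : {set V*V}) x y z : badj E y z ->
  inc x (bedge y z) = (x == y) || (x == z).
Proof.
by case: y => a; case: z => b //= _; case: x => c /=; rewrite ?orbF // eq_sym.
Qed.

Fixpoint steps {T : Type} (x : T) (s : seq T) : seq (T * T) :=
  if s is y :: s' then (x, y) :: steps y s' else [::].

Lemma path_edges_steps {V : finType} (x : V + V) s :
  path_edges (x :: s) = map (fun st => bedge st.1 st.2) (steps x s).
Proof. by elim: s x => [|y s IH] x //=; rewrite -IH. Qed.


Lemma steps_mem {T : eqType} (x y z : T) s : (y, z) \in steps x s -> (y \in x :: s) /\ (z \in s).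
Proof.
elim: s x => [|w s IH] x //=; rewrite in_cons => /orP [/eqP [-> ->]|/IH [H1 H2]].
  by split; rewrite !inE eqxx.
by split; rewrite in_cons ?H2 ?orbT //; rewrite -in_cons H1 orbT.
Qed.

Lemma steps_rel {T : eqType} (r : rel T) (x y z : T) s :
  path r x s -> (y, z) \in steps x s -> r y z.
Proof.
elim: s x => [|w s IH] x //= /andP [Hxw Hp]; rewrite in_cons => /orP [/eqP [-> ->]//|].
exact: IH.
Qed.

Lemma steps_func {T : eqType} (x y z z' : T) s : uniq (x :: s) ->
  (y, z) \in steps x s -> (y, z') \in steps x s -> z = z'.
Proof.
elim: s x => [|w s IH] x //= /andP [Hx Hu].
rewrite !in_cons !xpair_eqE => /orP [/andP [/eqP Hy /eqP Hz]|H1] /orP [/andP [/eqP Hy' /eqP Hz']|H2].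
- by rewrite Hz Hz'.
- by case: (steps_mem H2) => H _; rewrite -Hy H in Hx.
- by case: (steps_mem H1) => H _; rewrite -Hy' H in Hx.
exact: IH H1 H2.
Qed.

Lemma steps_inj {T : eqType} (x y y' z : T) s : uniq (x :: s) ->
  (y, z) \in steps x s -> (y', z) \in steps x s -> y = y'.
Proof.
elim: s x => [|w s IH] x //= /andP [Hx Hu].
have Hw : w \notin s by case/andP: Hu.
rewrite !in_cons !xpair_eqE => /orP [/andP [/eqP Hy /eqP Hz]|H1] /orP [/andP [/eqP Hy' /eqP Hz']|H2].
- by rewrite Hy Hy'.
- by case: (steps_mem H2) => _ H; rewrite -Hz H in Hw.
- by case: (steps_mem H1) => _ H; rewrite -Hz' H in Hw.
exact: IH H1 H2.
Qed.

Lemma steps_back {T : eqType} (x y z : T) s :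
  (y, z) \in steps x s -> y != x -> exists w, (w, y) \in steps x s.
Proof.
elim: s x => [|w s IH] x //=; rewrite in_cons => /orP [/eqP [-> _]|H1]; first by rewrite eqxx.
move=> Hyx; case: (eqVneq y w) => [->|Hyw]; first by exists x; rewrite in_cons eqxx.
by case: (IH _ H1 Hyw) => w' Hw'; exists w'; rewrite in_cons Hw' orbT.
Qed.

Lemma steps_fwd {T : eqType} (x y z : T) s :
  (y, z) \in steps x s -> z != last x s -> exists w, (z, w) \in steps x s.
Proof.
elim: s x => [|w s IH] x //=; rewrite in_cons => /orP [/eqP [_ ->]|H1] Hz.
  case: s IH Hz => [|w' s] IH /=; first by rewrite eqxx.
  by move=> _; exists w'; rewrite !in_cons eqxx orbT.
by case: (IH _ H1 Hz) => w' Hw'; exists w'; rewrite in_cons Hw' orbT.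
Qed.

Lemma steps_start {T : eqType} (x : T) s : s != [::] -> exists z, (x, z) \in steps x s.
Proof. by case: s => [|w s] //= _; exists w; rewrite in_cons eqxx. Qed.

Lemma steps_end {T : eqType} (x : T) s : s != [::] -> exists y, (y, last x s) \in steps x s.
Proof.
elim: s x => [|w s IH] x //= _; case: s IH => [|w' s] IH /=.
  by exists x; rewrite in_cons eqxx.
by case: (IH w isT) => y Hy; exists y; rewrite in_cons Hy orbT.
Qed.

Lemma steps_notend {T : eqType} (x y z : T) s : uniq (x :: s) ->
  (y, z) \in steps x s -> y != last x s.
Proof.
elim: s x => [|w s IH] x //= /andP [Hx Hu]; rewrite in_cons => /orP [/eqP [-> _]|H1].
  by apply: contra Hx => /eqP ->; rewrite mem_last.
exact: IH Hu H1.
Qed.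

Lemma steps_notstart {T : eqType} (x y z : T) s : uniq (x :: s) ->
  (y, z) \in steps x s -> z != x.
Proof.
move=> /andP [Hx _] /steps_mem [_ Hz]; by apply: contra Hx => /eqP <-.
Qed.

Lemma steps_orient {V : finType} (E M : {set V * V}) (x : V + V) s :
  path (badj E) x s ->
  sorted (fun e f : V * V => (e \in M) != (f \in M)) (pairmap (@bedge V) x s) ->
  forall y z, (y, z) \in steps x s ->
  (bedge y z \in M) (+) isl y = (bedge x (head x s) \in M) (+) isl x.
Proof.
elim: s x => [|w s IH] x //= /andP [Hxw Hp] Hs y z; rewrite in_cons.
case/orP => [/eqP [-> ->] //|H].
case: s IH Hp Hs H => [|w2 s] IH Hp Hs H //=.
move: Hs => /= /andP [Hr Hs].
rewrite (IH w Hp Hs y z H) /= (badj_isl Hxw).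
move: Hr; case: (bedge x w \in M); case: (bedge w w2 \in M); case: (isl x) => //.
Qed.

Record gstruct {V : finType} (E : {set V*V}) (a b : V) (P : {set V*V}) (R : rel (V+V)) : Prop :=
  GS {
    gs_badj : forall y z, R y z -> badj E y z;
    gs_func : forall y z z', R y z -> R y z' -> z = z';
    gs_inj : forall y y' z, R y z -> R y' z -> y = y';
    gs_back : forall y z, R y z -> y != inr a -> exists w, R w y;
    gs_fwd : forall y z, R y z -> z != inr b -> exists w, R z w;
    gs_start : exists z, R (inr a) z;
    gs_end : exists y, R y (inr b);
    gs_notend : forall y z, R y z -> y != inr b;
    gs_notstart : forall y z, R y z -> z != inr a;
    gs_P : forall e, (e \in P) = [exists y, exists z, R y z && (e == bedge y z)]
  }.

Definition good {V : finType} (E M : {set V*V}) (a b : V) (P : {set V*V}) : Prop :=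
  exists R, gstruct E a b P R /\ forall y z, R y z -> (bedge y z \in M) = isl y.

Lemma gs_rev {V : finType} (E : {set V*V}) a b P R :
  gstruct E a b P R -> gstruct E b a P (fun y z => R z y).
Proof.
case=> Hb Hf Hi Hbk Hfw [z0 Hs] [y0 He] Hne Hns HP; constructor.
- by move=> y z /Hb; rewrite badj_sym.
- by move=> y z z' H1 H2; apply: Hi H1 H2.
- by move=> y y' z H1 H2; apply: Hf H1 H2.
- by move=> y z H1 H2; apply: Hfw H1 H2.
- by move=> y z H1 H2; apply: Hbk H1 H2.
- by exists y0.
- by exists z0.
- by move=> y z H; apply: Hns H.
- by move=> y z H; apply: Hne H.
move=> e; rewrite HP; apply/existsP/existsP => [[y /existsP [z /andP [Hr /eqP ->]]]|[y /existsP [z /andP [Hr /eqP ->]]]].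
  by exists z; apply/existsP; exists y; rewrite Hr (bedge_sym (Hb _ _ Hr)) eqxx.
by exists z; apply/existsP; exists y; rewrite Hr /= -(bedge_sym (Hb _ _ Hr)) eqxx.
Qed.

Lemma alt_gstruct {V : finType} (E M : {set V*V}) (a b : V) p :
  alt_path E M (inr a) (inr b) p -> a != b ->
  exists R, gstruct E a b (Eset p) R /\
    exists c, forall y z, R y z -> (bedge y z \in M) = isl y (+) c.
Proof.
case: p => [|x s] //= [Hx Hl Hu Hp Hs] Hab.
have Hs0 : s != [::] by apply: contraNneq Hab => Hs0; move: Hl; rewrite Hx Hs0 /= => -[->].
exists (fun y z => (y, z) \in steps x s); split.
  constructor.
  - by move=> y z; apply: steps_rel Hp.
  - by move=> y z z'; apply: steps_func Hu.
  - by move=> y y' z; apply: steps_inj Hu.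
  - by move=> y z H; rewrite -Hx; apply: steps_back H.
  - by move=> y z H; rewrite -Hl; apply: steps_fwd H.
  - by rewrite -Hx; apply: steps_start.
  - by rewrite -Hl; apply: steps_end.
  - by move=> y z H; rewrite -Hl; apply: steps_notend H.
  - by move=> y z H; rewrite -Hx; apply: steps_notstart H.
  move=> e; rewrite /Eset inE path_edges_steps.
  apply/mapP/existsP => [[[y z] H ->]|[y /existsP [z /andP [H /eqP ->]]]].
    by exists y; apply/existsP; exists z; rewrite H eqxx.
  by exists (y, z).
exists ((bedge x (head x s) \in M) (+) isl x) => y z H.
rewrite -(steps_orient Hp Hs H).
by case: (bedge y z \in M); case: (isl y).
Qed.

Lemma D_inc {V : finType} (M : {set V*V}) v :
  (v \in D M) = [forall e in M, ~~ inc (inr v) e].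
Proof. by rewrite inE. Qed.

Lemma alt_good1 {V : finType} (E M : {set V*V}) (a b : V) p :
  alt_path E M (inr a) (inr b) p -> a \in D M -> b \notin D M -> good E M a b (Eset p).
Proof.
move=> Hp Ha Hb.
have Hab : a != b by apply: contraNneq Hb => <-.
case: (alt_gstruct Hp Hab) => R [gs [c Hc]].
have Hcf : c = false.
  case: (gs_start gs) => z0 H0.
  have Hinc : inc (inr a) (bedge (inr a) z0) by rewrite (inc_bedge _ (gs_badj gs H0)) eqxx.
  have : bedge (inr a) z0 \notin M.
    by apply/negP => Hin; move: Ha; rewrite D_inc => /forall_inP /(_ _ Hin); rewrite Hinc.
  by rewrite (Hc _ _ H0) /=; case: (c).
exists R; split => // y z H; by rewrite Hc // Hcf addbF.
Qed.

Lemma alt_good2 {V : finType} (E M : {set V*V}) (a b : V) p :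
  alt_path E M (inr a) (inr b) p -> a \notin D M -> b \in D M -> good E M b a (Eset p).
Proof.
move=> Hp Ha Hb.
have Hab : a != b by apply: contraNneq Ha => ->.
case: (alt_gstruct Hp Hab) => R [gs [c Hc]].
have Hct : c = true.
  case: (gs_end gs) => y0 H0.
  have Hinc : inc (inr b) (bedge y0 (inr b)) by rewrite (inc_bedge _ (gs_badj gs H0)) eqxx orbT.
  have : bedge y0 (inr b) \notin M.
    by apply/negP => Hin; move: Hb; rewrite D_inc => /forall_inP /(_ _ Hin); rewrite Hinc.
  have Hy0 : isl y0 by move: (gs_badj gs H0); case: (y0).
  by rewrite (Hc _ _ H0) Hy0; case: (c).
exists (fun y z => R z y); split; first exact: gs_rev.
move=> y z H; rewrite (bedge_sym (gs_badj gs H)) Hc // Hct (badj_isl (gs_badj gs H)).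
by case: (isl z).
Qed.

Lemma match_inc {V : finType} (E M : {set V*V}) : is_matching E M ->
  forall x e f, e \in M -> f \in M -> inc x e -> inc x f -> e = f.
Proof.
case=> _ H1 H2 [u|v] e f He Hf /= /eqP Ha /eqP Hb.
  by apply: H1 => //; rewrite Ha Hb.
by apply: H2 => //; rewrite Ha Hb.
Qed.

Lemma inc_match {V : finType} (E M : {set V*V}) : M \subset E ->
  (forall x e f, e \in M -> f \in M -> inc x e -> inc x f -> e = f) -> is_matching E M.
Proof.
move=> HE H; split => // e f He Hf Hef.
  by apply: (H (inl e.1)) => //=; rewrite ?Hef eqxx.
by apply: (H (inr e.2)) => //=; rewrite ?Hef eqxx.
Qed.

Lemma in_symdiff {V : finType} (A B : {set V*V}) e :
  (e \in symdiff A B) = (e \in A) (+) (e \in B).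
Proof. by rewrite /symdiff !inE; case: (e \in A); case: (e \in B). Qed.

Lemma isl_neq {V : finType} (x : V + V) a : isl x -> x != inr a.
Proof. by case: x. Qed.

Lemma flip1 {V : finType} (E M P : {set V*V}) (a b : V) :
  is_matching E M -> good E M a b P -> a \in D M -> b \notin D M ->
  is_matching E (symdiff M P) /\
  forall v, (v \in D (symdiff M P)) = ((v \in D M) && (v != a)) || (v == b).
Proof.
move=> HM [R [gs Hor]] Ha Hb.
have Hab : a != b by apply: contraNneq Hb => <-.
have HmE : M \subset E by case: HM.
have Hmi := match_inc HM.
have HP : forall e, e \in P -> exists y z, R y z /\ e = bedge y z.
  by move=> e; rewrite (gs_P gs) => /existsP [y /existsP [z /andP [H /eqP ->]]]; exists y, z.
have HPin : forall y z, R y z -> bedge y z \in P.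
  by move=> y z H; rewrite (gs_P gs); apply/existsP; exists y; apply/existsP; exists z; rewrite H eqxx.
have Hisl : forall y z, R y z -> isl z = ~~ isl y by move=> y z H; apply: badj_isl (gs_badj gs H).
pose inR x := exists y z, R y z /\ (x = y \/ x = z).
have HF1 : forall x e, e \in P -> inc x e -> inR x.
  move=> x e /HP [y [z [H ->]]]; rewrite (inc_bedge _ (gs_badj gs H)) => /orP [/eqP ->|/eqP ->];
  exists y, z; split => //; by [left | right].
have Hmin : forall x, inR x -> x != inr a -> exists2 m, m \in M & (m \in P) && inc x m.
  move=> x [y [z [H Hx]]] Hxa.
  case Hl: (isl x).
  - have [w Hw] : exists w, R x w.
      case: Hx => Hx; subst x; first by exists z.
      by apply: (gs_fwd gs H); apply: isl_neq.
    exists (bedge x w); first by rewrite Hor // Hl.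
    by rewrite HPin //= (inc_bedge _ (gs_badj gs Hw)) eqxx.
  - have [w Hw] : exists w, R w x.
      case: Hx => Hx; subst x; last by exists y.
      exact: (gs_back gs H).
    exists (bedge w x); first by rewrite Hor //; move: (Hisl _ _ Hw); rewrite Hl; case: (isl w).
    by rewrite HPin //= (inc_bedge _ (gs_badj gs Hw)) eqxx orbT.
have Hnon : forall x, inR x -> x != inr b -> exists2 n, n \in P & (n \notin M) && inc x n.
  move=> x [y [z [H Hx]]] Hxb.
  case Hl: (isl x).
  - have [w Hw] : exists w, R w x.
      case: Hx => Hx; subst x; last by exists y.
      by apply: (gs_back gs H); apply: isl_neq.
    exists (bedge w x); first exact: HPin.
    have Hw' : isl w = false by move: (Hisl _ _ Hw); rewrite Hl; case: (isl w).
    by rewrite Hor // Hw' /= (inc_bedge _ (gs_badj gs Hw)) eqxx orbT.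
  - have [w Hw] : exists w, R x w.
      case: Hx => Hx; subst x; first by exists z.
      exact: (gs_fwd gs H).
    exists (bedge x w); first exact: HPin.
    by rewrite Hor // Hl /= (inc_bedge _ (gs_badj gs Hw)) eqxx.
have HnU : forall x e f, e \in P -> e \notin M -> f \in P -> f \notin M -> inc x e -> inc x f -> e = f.
  move=> x e f /HP [y [z [H ->]]] HeM /HP [y' [z' [H' ->]]] HfM.
  rewrite Hor // in HeM; rewrite Hor // in HfM.
  have Hz : isl z by rewrite (Hisl _ _ H).
  have Hz' : isl z' by rewrite (Hisl _ _ H').
  rewrite (inc_bedge _ (gs_badj gs H)) (inc_bedge _ (gs_badj gs H')).
  case/orP => /eqP Hx1; case/orP => /eqP Hx2; subst x.
  - by subst y'; rewrite (gs_func gs H H').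
  - by subst y; rewrite Hz' in HeM.
  - by subst y'; rewrite Hz in HfM.
  - by subst z'; rewrite (gs_inj gs H H').
have Hmix : forall x e f, e \in M -> e \notin P -> f \in P -> inc x e -> inc x f -> False.
  move=> x e f HeM HeP HfP Hie Hif.
  have Hxa : x != inr a.
    apply/eqP => Hx; subst x; move: Ha; rewrite D_inc => /forall_inP /(_ _ HeM).
    by rewrite Hie.
  case: (Hmin x (HF1 _ _ HfP Hif) Hxa) => m HmM /andP [HmP Him].
  by rewrite (Hmi x e m HeM HmM Hie Him) HmP in HeP.
split.
  apply: inc_match.
    apply/subsetP => e; rewrite in_symdiff; case HeM: (e \in M); case HeP: (e \in P) => //= _.
      exact: (subsetP HmE).
    by case: (HP _ HeP) => y [z [H ->]]; apply: badj_inE (gs_badj gs H).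
  move=> x e f; rewrite !in_symdiff.
  case HeM: (e \in M); case HeP: (e \in P) => //= _;
  case HfM: (f \in M); case HfP: (f \in P) => //= _ Hie Hif.
  - exact: Hmi Hie Hif.
  - by case: (Hmix x e f HeM (negbT HeP) HfP Hie Hif).
  - by case: (Hmix x f e HfM (negbT HfP) HeP Hif Hie).
  - by apply: (HnU x e f) => //; rewrite ?HeM ?HfM.
move=> v; rewrite !D_inc.
case: (eqVneq v b) => [->|Hvb].
  rewrite orbT; apply/forall_inP => e; rewrite in_symdiff.
  case HeM: (e \in M); case HeP: (e \in P) => //= _; apply/negP => Hie.
  - case: (gs_end gs) => y0 H0.
    apply: (Hmix (inr b) e (bedge y0 (inr b)) HeM (negbT HeP) (HPin _ _ H0) Hie).
    by rewrite (inc_bedge _ (gs_badj gs H0)) eqxx orbT.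
  - case: (HP _ HeP) => y [z [H He]]; subst e.
    move: HeM; rewrite Hor // => Hy.
    move: Hie; change ((bedge y z).2 == b) with (inc (inr b) (bedge y z)); rewrite (inc_bedge _ (gs_badj gs H)) => /orP [/eqP Hy'|/eqP Hz].
      by move: (gs_notend gs H); rewrite -Hy' eqxx.
    by move: (Hisl _ _ H); rewrite -Hz Hy.
rewrite orbF.
case: (eqVneq v a) => [->|Hva].
  rewrite andbF; apply/negbTE/negP => /forall_inP H.
  case: (gs_start gs) => z0 H0.
  case: (Hnon (inr a)); first by exists (inr a), z0; split => //; left.
    by rewrite (inj_eq (@inr_inj _ _)).
  move=> n HnP /andP [HnM Hin].
  by move: (H n); rewrite in_symdiff HnP (negbTE HnM) Hin => /(_ isT).
rewrite andbT.
case: (boolP [exists e in P, inc (inr v) e]) => [/exists_inP [f Hf Hif] | Hno].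
  have HR := HF1 _ _ Hf Hif.
  case: (Hmin _ HR); first by rewrite (inj_eq (@inr_inj _ _)).
  move=> m HmM /andP [HmP Him].
  case: (Hnon _ HR); first by rewrite (inj_eq (@inr_inj _ _)).
  move=> n HnP /andP [HnM Hin].
  transitivity false.
    apply/negbTE/negP => /forall_inP /(_ n).
    by rewrite in_symdiff HnP (negbTE HnM) Hin => /(_ isT).
  apply/esym/negbTE/negP => /forall_inP /(_ m HmM).
  by rewrite Him.
have Hno' : forall e, e \in P -> ~~ inc (inr v) e.
  by move=> e He; apply/negP => Hi; move/negP: Hno; apply; apply/exists_inP; exists e.
apply/forall_inP/forall_inP => H e He.
  case HeP: (e \in P); first exact: Hno'.
  by apply: H; rewrite in_symdiff He HeP.
move: He; rewrite in_symdiff; case HeP: (e \in P); first by move=> _; apply: Hno'.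
by rewrite addbF => /H.
Qed.

Lemma in_cons_r {T : eqType} (x y : T) s : y \in s -> y \in x :: s.
Proof. by rewrite in_cons => ->; rewrite orbT. Qed.

Lemma good_symdiff {V : finType} (E M Q P : {set V*V}) a b :
  good E M a b P -> [disjoint P & Q] -> good E (symdiff M Q) a b P.
Proof.
move=> [R [gs Hor]] Hd; exists R; split => // y z H.
have HP : bedge y z \in P.
  by rewrite (gs_P gs); apply/existsP; exists y; apply/existsP; exists z; rewrite H eqxx.
by rewrite in_symdiff (disjointFr Hd HP) addbF Hor.
Qed.

Lemma symdiffU {V : finType} (M A B : {set V*V}) :
  [disjoint A & B] -> symdiff M (A :|: B) = symdiff (symdiff M A) B.
Proof.
move=> Hd; apply/setP => e; rewrite !in_symdiff inE.
case HA: (e \in A); first by rewrite (disjointFr Hd HA) /= addbF.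
by rewrite /= addbF.
Qed.

Lemma symdiff0 {V : finType} (M : {set V*V}) : symdiff M set0 = M.
Proof. by apply/setP => e; rewrite in_symdiff inE addbF. Qed.

Lemma mem_bigcup_seq {V : finType} (J : seq nat) (P : nat -> {set V*V}) e :
  (e \in \bigcup_(j <- J) P j) = has (fun j => e \in P j) J.
Proof. by elim: J => [|j J IH]; rewrite ?big_nil ?big_cons ?inE ?IH. Qed.

Lemma flip_list {V : finType} (E M : {set V*V}) (J : seq nat) (a b : nat -> V)
    (P : nat -> {set V*V}) :
  is_matching E M -> uniq (map a J) -> uniq (map b J) ->
  (forall j, j \in J -> [/\ good E M (a j) (b j) (P j), a j \in D M & b j \notin D M]) ->
  (forall i j, i \in J -> j \in J -> a i != a j -> [disjoint P i & P j]) ->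
  is_matching E (symdiff M (\bigcup_(j <- J) P j)) /\
  forall v, (v \in D (symdiff M (\bigcup_(j <- J) P j))) =
            ((v \in D M) && (v \notin map a J)) || (v \in map b J).
Proof.
elim: J M => [|j J IH] M HM Ha Hb Hg Hd.
  by rewrite big_nil symdiff0; split => // v; rewrite orbF andbT.
move: Ha Hb => /= /andP [Haj Ha] /andP [Hbj Hb].
have Hneq : forall i, i \in J -> a i != a j.
  by move=> i Hi; apply: contraNneq Haj => <-; apply: map_f.
have Hdj : [disjoint P j & \bigcup_(i <- J) P i].
  rewrite -setI_eq0; apply/eqP/setP => e; rewrite !inE mem_bigcup_seq.
  apply/negbTE/negP => /andP [H1 /hasP [i Hi H2]].
  have Hdd := Hd j i (mem_head _ _) (in_cons_r j Hi).
  have Hji : a j != a i by rewrite eq_sym Hneq.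
  by rewrite (disjointFr (Hdd Hji) H1) in H2.
rewrite big_cons symdiffU //.
case: (Hg j (mem_head _ _)) => Hgj Hajm Hbjm.
case: (flip1 HM Hgj Hajm Hbjm) => HM1 HD1.
have Hg' : forall i, i \in J -> [/\ good E (symdiff M (P j)) (a i) (b i) (P i),
      a i \in D (symdiff M (P j)) & b i \notin D (symdiff M (P j))].
  move=> i Hi; case: (Hg i (in_cons_r j Hi)) => Hgi Hai Hbi; split.
  + apply: good_symdiff Hgi _; apply: Hd; rewrite ?mem_head ?in_cons_r //.
    exact: Hneq.
  + by rewrite HD1 Hai Hneq.
  + rewrite HD1 (negbTE Hbi) /=; apply: contraNneq Hbj => <-; exact: map_f.
have Hd' : forall i i', i \in J -> i' \in J -> a i != a i' -> [disjoint P i & P i'].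
  by move=> i i' Hi Hi'; apply: Hd; apply: in_cons_r.
have [HM' HD'] := IH (symdiff M (P j)) HM1 Ha Hb Hg' Hd'.
split => // v; rewrite HD' HD1 /= !in_cons.
case Hvb: (v == b j).
  have Hn : v \notin map a J.
    apply/mapP => -[i Hi Hv]; move/eqP: Hvb => Hvb.
    case: (Hg i (in_cons_r j Hi)) => _ Hai _.
    by move: Hbjm; rewrite -Hvb Hv Hai.
  by rewrite Hn /= !orbT.
by case: (v \in D M); case: (v == a j); case: (v \in map a J); case: (v \in map b J).
Qed.

Lemma card_D_match {V : finType} (E M : {set V*V}) : is_matching E M -> #|D M| + #|M| = #|V|.
Proof.
case=> _ _ H2.
have -> : D M = ~: [set e.2 | e in M].
  apply/setP => v; rewrite inE [in RHS]inE.
  apply/forall_inP/negP => [H /imsetP [e He Hv]|H e He].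
    by move: (H e He); rewrite Hv eqxx.
  by apply/eqP => Hv; apply: H; apply/imsetP; exists e.
have Hc : #|[set e.2 | e in M]| = #|M|.
  by apply: card_in_imset => e f He Hf; apply: H2.
by rewrite -Hc addnC cardsC.
Qed.

Lemma card_flip {V : finType} (D0 D1 : {set V}) (A B : seq V) :
  (forall v, (v \in D1) = ((v \in D0) && (v \notin A)) || (v \in B)) ->
  {subset A <= D0} -> (forall v, v \in B -> v \notin D0) ->
  uniq A -> uniq B -> size A = size B -> #|D1| = #|D0|.
Proof.
move=> HD HA HB uA uB Hs.
have -> : D1 = (D0 :\: [set x in A]) :|: [set x in B].
  by apply/setP => v; rewrite HD !inE andbC.
have Hd : [disjoint D0 :\: [set x in A] & [set x in B]].
  rewrite -setI_eq0; apply/eqP/setP => v; rewrite !inE.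
  case Hv: (v \in B); last by rewrite andbF.
  by rewrite (negbTE (HB v Hv)) andbF.
rewrite cardsU (disjoint_setI0 Hd) cards0 subn0 cardsD.
have -> : D0 :&: [set x in A] = [set x in A].
  by apply/setIidPr/subsetP => v; rewrite inE => /HA.
have cA : #|[set x in A]| = size A by rewrite cardsE; apply/card_uniqP.
have cB : #|[set x in B]| = size B by rewrite cardsE; apply/card_uniqP.
have Hle : #|[set x in A]| <= #|D0|.
  by apply: subset_leq_card; apply/subsetP => v; rewrite inE => /HA.
by rewrite cB -Hs -cA subnK.
Qed.

Lemma layer2E (l : layer) : (l == L2) = ~~ (l == L1).
Proof. by case: l. Qed.

Lemma cardUD {T : finType} (A B : {set T}) : #|A :|: B| = #|A| + #|B :\: A|.
Proof.
rewrite cardsU cardsD setIC.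
have : #|B :&: A| <= #|B| by apply: subset_leq_card; apply: subsetIl.
lia.
Qed.

Lemma ar1 (a b : nat) : a + b + 2 = (true + a) + (true + b).
Proof. simpl; lia. Qed.

Lemma ar2 (a b : nat) : a + b + 1 = a + (true + b).
Proof. simpl; lia. Qed.

Theorem mainTheorem2 (V : finType) (E1 E2 : {set V * V}) (k1 k2 : nat)
    (M1 M2 : {set V * V}) (v0 : V) (segs : seq (seg V)) :
  Mk E1 k1 M1 -> Mk E2 k2 M2 ->
  is_CLAP E1 E2 M1 M2 v0 segs -> feasible v0 segs ->
  let M1' := apply_layer M1 L1 segs in
  let M2' := apply_layer M2 L2 segs in
  [/\ is_matching E1 M1' /\ is_matching E2 M2',
      #|D M1'| = k1 /\ #|D M2'| = k2,
      Delta M1' M2' + 2 = Delta M1 M2 &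
      #|U M1' M2'| + 1 = #|U M1 M2|].
Proof.
move=> [HM1 Hk1] [HM2 Hk2] [Hadm Halt Huniq Hv0 Hvk] Hfeas M1' M2'.
set k := size segs.
set sd : seg V := (L1, [::], v0).
set vs := clap_vertices v0 segs.
pose lay j := seg_layer (nth sd segs j).
pose pth j := seg_path (nth sd segs j).
pose vv j := nth v0 vs j.
pose filt l := [seq j <- index_iota 0 k | lay j == l].
have HM1' : M1' = symdiff M1 (\bigcup_(j <- filt L1) Eset (pth j)).
  by rewrite /M1' /apply_layer (big_nth sd) -big_filter.
have HM2' : M2' = symdiff M2 (\bigcup_(j <- filt L2) Eset (pth j)).
  by rewrite /M2' /apply_layer (big_nth sd) -big_filter.
have Hadm' : forall i, i < k -> admissible E1 E2 M1 M2 (lay i) (vv i) (vv i.+1) (pth i) := Hadm.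
have Halt' : forall i, i.+1 < k -> lay i <> lay i.+1 := Halt.
have Hfeas' : forall i j, i < k -> j < k -> i <> j -> lay i = lay j ->
    [disjoint Eset (pth i) & Eset (pth j)] := Hfeas.
have Hsize : size vs = k.+1 by rewrite /vs /clap_vertices /= size_map.
have Hvvinj : forall i j, i <= k -> j <= k -> vv i = vv j -> i = j.
  by move=> i j Hi Hj /eqP; rewrite /vv nth_uniq ?Hsize // => /eqP.
have HinJ : forall l j, (j \in filt l) = (j < k) && (lay j == l).
  by move=> l j; rewrite mem_filter mem_index_iota leq0n andbC.
have Hmem : forall l i, i <= k -> (vv i \in map vv (filt l)) = (i < k) && (lay i == l).
  move=> l i Hi; apply/mapP/idP => [[j Hj Heq]|H]; last by exists i; rewrite ?HinJ.
  move: Hj; rewrite HinJ => /andP [Hjk Hjl].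
  by rewrite (Hvvinj i j Hi (ltnW Hjk) Heq) Hjk Hjl.
have HmemS : forall l i, i <= k ->
    (vv i \in map (fun j => vv j.+1) (filt l)) = (0 < i) && (lay i.-1 == l).
  move=> l i Hi; apply/mapP/idP => [[j Hj Heq]|/andP [H1 H2]].
    move: Hj; rewrite HinJ => /andP [Hjk Hjl].
    by rewrite (Hvvinj i j.+1 Hi Hjk Heq) /= Hjl.
  exists i.-1; first by rewrite HinJ H2 andbT; apply: (leq_trans _ Hi); rewrite ltn_predL.
  by rewrite prednK.
have Hnotvs : forall l v, v \notin vs -> (v \in map vv (filt l) = false) /\
    (v \in map (fun j => vv j.+1) (filt l) = false).
  move=> l v Hv; split; apply/negbTE/mapP => -[j Hj Heq]; move: Hj; rewrite HinJ => /andP [Hjk _];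
  move: Hv; rewrite Heq /vv mem_nth // Hsize ltnS //; exact: ltnW.
have Hu : forall l, uniq (map vv (filt l)) /\ uniq (map (fun j => vv j.+1) (filt l)).
  move=> l; rewrite !map_inj_in_uniq ?filter_uniq /index_iota ?subn0 ?iota_uniq //.
    move=> i j; rewrite !HinJ => /andP [Hi _] /andP [Hj _] /= Heq.
    by have [] : i.+1 = j.+1 by apply: (Hvvinj _ _ Hi Hj Heq).
  move=> i j; rewrite !HinJ => /andP [Hi _] /andP [Hj _] Heq.
  exact: (Hvvinj i j (ltnW Hi) (ltnW Hj) Heq).
have Hg1 : forall j, j \in filt L1 ->
    [/\ good E1 M1 (vv j) (vv j.+1) (Eset (pth j)), vv j \in D M1 & vv j.+1 \notin D M1].
  move=> j; rewrite HinJ => /andP [Hjk /eqP Hl]; have := Hadm' j Hjk.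
  rewrite /admissible Hl /= => -[Hp [Ha Hb]]; split => //; exact: alt_good1.
have Hg2 : forall j, j \in filt L2 ->
    [/\ good E2 M2 (vv j.+1) (vv j) (Eset (pth j)), vv j.+1 \in D M2 & vv j \notin D M2].
  move=> j; rewrite HinJ => /andP [Hjk /eqP Hl]; have := Hadm' j Hjk.
  rewrite /admissible Hl /= => -[Hp [Ha Hb]]; split => //; exact: alt_good2.
have Hd1 : forall i j, i \in filt L1 -> j \in filt L1 -> vv i != vv j ->
    [disjoint Eset (pth i) & Eset (pth j)].
  move=> i j; rewrite !HinJ => /andP [Hi /eqP Hli] /andP [Hj /eqP Hlj] Hne.
  apply: Hfeas' => //; last by rewrite Hli Hlj.
  by move=> Hij; rewrite Hij eqxx in Hne.
have Hd2 : forall i j, i \in filt L2 -> j \in filt L2 -> vv i.+1 != vv j.+1 ->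
    [disjoint Eset (pth i) & Eset (pth j)].
  move=> i j; rewrite !HinJ => /andP [Hi /eqP Hli] /andP [Hj /eqP Hlj] Hne.
  apply: Hfeas' => //; last by rewrite Hli Hlj.
  by move=> Hij; rewrite Hij eqxx in Hne.
have [Hu1a Hu1b] := Hu L1.
have [Hu2a Hu2b] := Hu L2.
have [HM1m HD1] := flip_list (a := vv) (b := fun j => vv j.+1) (P := fun j => Eset (pth j))
  HM1 Hu1a Hu1b Hg1 Hd1.
have [HM2m HD2] := flip_list (a := fun j => vv j.+1) (b := vv) (P := fun j => Eset (pth j))
  HM2 Hu2b Hu2a Hg2 Hd2.
rewrite -HM1' in HM1m HD1; rewrite -HM2' in HM2m HD2.
have HcD1 : #|D M1| = k1 by have := card_D_match HM1; lia.
have HcD2 : #|D M2| = k2 by have := card_D_match HM2; lia.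
have HcD1' : #|D M1'| = #|D M1|.
  apply: (card_flip HD1) => //; last by rewrite !size_map.
    by move=> v /mapP [j Hj ->]; case: (Hg1 j Hj).
  by move=> v /mapP [j Hj ->]; case: (Hg1 j Hj).
have HcD2' : #|D M2'| = #|D M2|.
  apply: (card_flip HD2) => //; last by rewrite !size_map.
    by move=> v /mapP [j Hj ->]; case: (Hg2 j Hj).
  by move=> v /mapP [j Hj ->]; case: (Hg2 j Hj).
have Hk0 : 0 < k.
  rewrite lt0n; apply/eqP => Hk0; move: Hvk Hv0; rewrite /k in Hk0.
  rewrite (size0nil Hk0) /= /DD1 /DD2 !in_setD.
  by case: (v0 \in D M1); case: (v0 \in D M2).
have Hvvk : vv k = last v0 [seq seg_end i | i <- segs].
  rewrite /vv /vs /clap_vertices -nth_last size_map.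
  by move: Hk0; rewrite /k; case: (size segs).
have Hvk' : vv k \in DD2 M1 M2 by rewrite Hvvk.
have Hfacts : forall i, i <= k ->
  [&& (i < k) ==> (lay i == L1) ==> (vv i \in D M1),
      (i < k) ==> ~~ (lay i == L1) ==> (vv i \notin D M2),
      (0 < i) ==> (lay i.-1 == L1) ==> (vv i \notin D M1),
      (0 < i) ==> ~~ (lay i.-1 == L1) ==> (vv i \in D M2),
      (0 < i) ==> (i < k) ==> ((lay i.-1 == L1) != (lay i == L1)),
      ~~ (0 < i) ==> ((vv i \in D M1) && (vv i \notin D M2)),
      ~~ (i < k) ==> ((vv i \in D M2) && (vv i \notin D M1)) &
      (0 < i) || (i < k)].
  move=> i Hi.
  have F1 : (i < k) ==> (lay i == L1) ==> (vv i \in D M1).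
    apply/implyP => Hik; apply/implyP => /eqP Hl.
    by move: (Hadm' i Hik); rewrite /admissible Hl => -[_ [H _]].
  have F2 : (i < k) ==> ~~ (lay i == L1) ==> (vv i \notin D M2).
    apply/implyP => Hik; apply/implyP => Hl.
    have HL : lay i = L2 by move: Hl; case: (lay i).
    by move: (Hadm' i Hik); rewrite /admissible HL => -[_ [H _]].
  have F3 : (0 < i) ==> (lay i.-1 == L1) ==> (vv i \notin D M1).
    apply/implyP => Hi0; apply/implyP => /eqP Hl.
    have Hik : i.-1 < k by apply: (leq_trans _ Hi); rewrite ltn_predL.
    by move: (Hadm' _ Hik); rewrite /admissible Hl prednK // => -[_ [_ H]].
  have F4 : (0 < i) ==> ~~ (lay i.-1 == L1) ==> (vv i \in D M2).
    apply/implyP => Hi0; apply/implyP => Hl.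
    have HL : lay i.-1 = L2 by move: Hl; case: (lay i.-1).
    have Hik : i.-1 < k by apply: (leq_trans _ Hi); rewrite ltn_predL.
    by move: (Hadm' _ Hik); rewrite /admissible HL prednK // => -[_ [_ H]].
  have F5 : (0 < i) ==> (i < k) ==> ((lay i.-1 == L1) != (lay i == L1)).
    apply/implyP => Hi0; apply/implyP => Hik.
    have Hik' : i.-1.+1 < k by rewrite prednK.
    move: (Halt' _ Hik'); rewrite prednK //.
    by case: (lay i.-1); case: (lay i).
  have F6 : ~~ (0 < i) ==> ((vv i \in D M1) && (vv i \notin D M2)).
    apply/implyP; rewrite -eqn0Ngt => /eqP ->.
    by move: Hv0; rewrite /DD1 in_setD andbC.
  have F7 : ~~ (i < k) ==> ((vv i \in D M2) && (vv i \notin D M1)).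
    apply/implyP => Hik; have -> : i = k by apply/eqP; rewrite eqn_leq Hi leqNgt.
    by move: Hvk'; rewrite /DD2 in_setD andbC.
  have F8 : (0 < i) || (i < k) by case: (i) Hi => [|i'] //= _.
  by rewrite F1 F2 F3 F4 F5 F6 F7 F8.
have Hv0vs : v0 \in vs by rewrite /vs /clap_vertices mem_head.
have Hvkvs : vv k \in vs by rewrite /vv mem_nth // Hsize.
have HDD1 : DD1 M1' M2' = DD1 M1 M2 :\ v0.
  apply/setP => v; rewrite /DD1 in_setD1 !in_setD HD1 HD2.
  case Hv: (v \in vs); last first.
    have Hv0' : v != v0 by apply: contraNneq (negbT Hv) => ->.
    case: (Hnotvs L1 v (negbT Hv)) => -> ->; case: (Hnotvs L2 v (negbT Hv)) => -> ->.
    by rewrite Hv0' !andbT !orbF.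
  have Hi : index v vs <= k by rewrite -ltnS -Hsize index_mem.
  have -> : v = vv (index v vs) by rewrite /vv nth_index.
  move: (index v vs) Hi => i Hi.
  have Hv0i : (vv i != v0) = (0 < i).
    by rewrite lt0n -[v0]/(vv 0) /vv nth_uniq ?Hsize.
  rewrite Hv0i Hmem // HmemS // Hmem // HmemS // !layer2E.
  move: (Hfacts i Hi).
  case: (vv i \in D M1); case: (vv i \in D M2); case: (lay i == L1); case: (lay i.-1 == L1);
  case: (0 < i); by case: (i < k).
have HDD2 : DD2 M1' M2' = DD2 M1 M2 :\ vv k.
  apply/setP => v; rewrite /DD2 in_setD1 !in_setD HD1 HD2.
  case Hv: (v \in vs); last first.
    have Hvk'' : v != vv k by apply: contraNneq (negbT Hv) => ->.
    case: (Hnotvs L1 v (negbT Hv)) => -> ->; case: (Hnotvs L2 v (negbT Hv)) => -> ->.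
    by rewrite Hvk'' !andbT !orbF.
  have Hi : index v vs <= k by rewrite -ltnS -Hsize index_mem.
  have -> : v = vv (index v vs) by rewrite /vv nth_index.
  move: (index v vs) Hi => i Hi.
  have Hvki : (vv i != vv k) = (i < k).
    by rewrite /vv nth_uniq ?Hsize // ltn_neqAle Hi andbT.
  rewrite Hvki Hmem // HmemS // Hmem // HmemS // !layer2E.
  move: (Hfacts i Hi).
  case: (vv i \in D M1); case: (vv i \in D M2); case: (lay i == L1); case: (lay i.-1 == L1);
  case: (0 < i); by case: (i < k).
have HU : forall A B : {set V * V}, #|U A B| = #|D A| + #|DD2 A B|.
  by move=> A B; apply: cardUD.
split.
- by split.
- by rewrite HcD1' HcD2'.
- rewrite /Delta HDD1 HDD2 (cardsD1 v0 (DD1 M1 M2)) (cardsD1 (vv k) (DD2 M1 M2)) Hv0 Hvk'.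
  exact: ar1.
rewrite !HU HDD2 HcD1' (cardsD1 (vv k) (DD2 M1 M2)) Hvk'.
exact: ar2.
Qed.
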